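(* Let $(X,\ast,u,d)$ be a finite GL-rack, let $\Delta=\alpha_1\cdots\alpha_n$ be the disjoint cycle decomposition of its diagonal map (fixed points counted as $1$-cycles), $A_i=\operatorname{supp}(\alpha_i)$, and let $B_1,\dots,B_m$ be the sets obtained by taking, for each cycle length $\ell$ occurring, the union of all $A_i$ with $|A_i|=\ell$. Then for each $1\le j\le m$, $B_j\ast X:=\{b\ast x: b\in B_j, x\in X\}=B_j$.
   Context: A rack is a set $X$ with a binary operation $\ast$ such that for every $y\in X$ the map $x\mapsto x\ast y$ is a bijection of $X$ and $(x\ast y)\ast z=(x\ast z)\ast(y\ast z)$ for all $x,y,z$. A GL-rack is a quadruple $(X,\ast,u,d)$ where $(X,\ast)$ is a rack and $u,d\colon X\to X$ are maps such that for all $x,y\in X$: $u(d(x\ast x))=d(u(x\ast x))=x$; $u(x\ast y)=u(x)\ast y$ and $d(x\ast y)=d(x)\ast y$; $x\ast u(y)=x\ast d(y)=x\ast y$. The diagonal map is $\Delta(x)=x\ast x$; for a finite GL-rack it is a bijection (rack automorphism) and $\Delta=(u\circ d)^{-1}$. *)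

(* Defs.v *)
From mathcomp Require Import all_boot.
Set Implicit Arguments. Unset Strict Implicit. Unset Printing Implicit Defensive.

Definition is_rack (T : Type) (op : T -> T -> T) : Prop :=
  (forall y : T, bijective (fun x => op x y)) /\
  (forall x y z : T, op (op x y) z = op (op x z) (op y z)).

Definition is_GLrack (T : Type) (op : T -> T -> T) (u d : T -> T) : Prop :=
  [/\ is_rack op,
      (forall x, u (d (op x x)) = x /\ d (u (op x x)) = x),
      (forall x y, u (op x y) = op (u x) y /\ d (op x y) = op (d x) y)
    & (forall x y, op x (u y) = op x y /\ op x (d y) = op x y)].

Definition diag (T : Type) (op : T -> T -> T) : T -> T := fun x => op x x.

(* B_l : union of the supports of the cycles of Delta of length l, i.e. the
   set of points whose Delta-orbit (the cycle containing it) has size l. *)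
Definition cycle_block (T : finType) (op : T -> T -> T) (l : nat) : {set T} :=
  [set x | order (diag op) x == l].

Definition rack_act_set (T : finType) (op : T -> T -> T) (B : {set T}) : {set T} :=
  [set op b x | b in B, x in [set: T]].

(* Main.v *)
Require Import Defs.
From mathcomp Require Import all_boot.

Lemma order_conj (T : finType) (f g : T -> T) (x : T) :
  injective g -> (forall y, f (g y) = g (f y)) -> order f (g x) = order f x.
Proof.
move=> ginj fg.
have itg : forall n y, iter n f (g y) = g (iter n f y).
  by elim=> [|n IH] y //=; rewrite IH fg.
rewrite /order -(card_imset (mem (fconnect f x)) ginj).
apply: eq_card => z; apply/idP/imsetP.
- move=> /iter_findex <-; rewrite itg.
  by exists (iter (findex f (g x) z) f x) => //; apply: fconnect_iter.
- by move=> [y /iter_findex <- ->]; rewrite -itg; apply: fconnect_iter.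
Qed.

Theorem proposition3p7 (X : finType) (op : X -> X -> X) (u d : X -> X) :
  is_GLrack op u d ->
  forall l : nat, (exists x : X, order (diag op) x = l) ->
    rack_act_set op (cycle_block op l) = cycle_block op l.
Proof.
case=> [[bij sd] _ _ _] l _.
have key : forall b y, order (diag op) (op b y) = order (diag op) b.
  move=> b y; apply: (@order_conj _ _ (fun x => op x y)); first exact: bij_inj (bij y).
  by move=> z; rewrite /diag -sd.
apply/setP=> z; apply/imset2P/idP.
- by move=> [b x]; rewrite !inE => /eqP <- _ ->; rewrite key.
- move=> hz; case: (bij z) => g gK Kg; have Kz : op (g z) z = z by exact: Kg.
  exists (g z) z; try done.
  by move: hz; rewrite !inE -(key (g z) z) Kz.
Qed.
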